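(* Let $(H,h)$ be an equivariant pair. Suppose $\{(H_n,h_n)\}$ is a sequence derived from $(H,h)$, and there are three distinct points $a,b,c \in S$ such that the sequences $\{h_n(a)\}$, $\{h_n(b)\}$, $\{h_n(c)\}$ converge to three distinct points of $S$. Then $\{(H_n,h_n)\}$ is tame, i.e. for every $p\in\mathbb{H}^3$ the sequence $\{H_n(p)\}$ is bounded in $\mathbb{H}^3$.
   Context: $\mathbb{H}^3$ is the upper half space model $\mathbb{C}\times(0,\infty)$ of hyperbolic $3$-space, with ideal boundary the Riemann sphere $S=\mathbb{C}\cup\{\infty\}$; $\mathcal{I}$ is the isometry group of $\mathbb{H}^3$, and each element of $\mathcal{I}$ extends to a conformal transformation of $S$ (every conformal transformation of $S$ arises this way), so $\mathcal{I}$ acts on $\mathbb{H}^3\cup S$. A nice lattice is a subgroup $\Gamma\subset\mathcal{I}$ acting freely, properly discontinuously and cocompactly on $\mathbb{H}^3$. A map $H:\mathbb{H}^3\to\mathbb{H}^3$ is $K$-bi-Lipschitz if it is a bijection with $K^{-1}d(x,y)\le d(H(x),H(y))\le Kd(x,y)$. An equivariant pair $(H,h)$ consists of a bi-Lipschitz map $H:\mathbb{H}^3\to\mathbb{H}^3$ and a homeomorphism $h:S\to S$ such that $H\cup h$ is continuous on $\mathbb{H}^3\cup S$ (i.e. $h$ is the continuous extension of $H$), together with nice lattices $\Gamma_1,\Gamma_2$ such that $H\Gamma_1H^{-1}=\Gamma_2$ and $h\Gamma_1h^{-1}=\Gamma_2$. A sequence $\{(H_n,h_n)\}$ is derived from $(H,h)$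 if for each $n$ there are $f_n,g_n\in\mathcal{I}$ with $H_n=f_nHg_n$ and $h_n=f_nhg_n$. *)

(* Defs.v *)
From Stdlib Require Import Reals List.
Open Scope R_scope.

Record H3 : Type := mkH3 { hx : R; hy : R; ht : R; ht_pos : 0 < ht }.

Definition arcosh (u : R) : R := ln (u + sqrt (u * u - 1)).

Definition dH (p q : H3) : R :=
  arcosh (1 + ((hx p - hx q)^2 + (hy p - hy q)^2 + (ht p - ht q)^2)
              / (2 * ht p * ht q)).

(* ---------- Riemann sphere S = C ∪ {∞}: None is ∞ ---------- *)
Definition S : Type := option (R * R).

(* ---------- Topology on H^3 ∪ S ----------
   H^3 ∪ S (closed upper half space plus ∞) is identified with the closed
   unit ball of R^3 via the standard Cayley-type map
   (x,y,t) |-> (2x, 2y, x^2+y^2+t^2-1) / (x^2+y^2+(t+1)^2),  ∞ |-> (0,0,1),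
   a homeomorphism; the topology of H^3 ∪ S is the induced Euclidean one. *)
Definition ballmap (x y t : R) : R * R * R :=
  let D := x^2 + y^2 + (t + 1)^2 in
  (2 * x / D, 2 * y / D, (x^2 + y^2 + t^2 - 1) / D).

Definition Hbar : Type := (H3 + S)%type.

Definition emb (z : Hbar) : R * R * R :=
  match z with
  | inl p => ballmap (hx p) (hy p) (ht p)
  | inr None => (0, 0, 1)
  | inr (Some (x, y)) => ballmap x y 0
  end.

Definition eucl (u v : R * R * R) : R :=
  let '(a1, a2, a3) := u in let '(b1, b2, b3) := v in
  sqrt ((a1 - b1)^2 + (a2 - b2)^2 + (a3 - b3)^2).

Definition dbar (z w : Hbar) : R := eucl (emb z) (emb w).

Definition dS (a b : S) : R := dbar (inr a) (inr b).

Definition continuous_bar (phi : Hbar -> Hbar) : Prop :=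
  forall z eps, 0 < eps -> exists delta, 0 < delta /\
    forall w, dbar z w < delta -> dbar (phi z) (phi w) < eps.

Definition continuous_S (f : S -> S) : Prop :=
  forall a eps, 0 < eps -> exists delta, 0 < delta /\
    forall b, dS a b < delta -> dS (f a) (f b) < eps.

Definition converges_S (u : nat -> S) (l : S) : Prop :=
  forall eps, 0 < eps -> exists N, forall n, (N <= n)%nat -> dS (u n) l < eps.

Definition union_map (F : H3 -> H3) (f : S -> S) (z : Hbar) : Hbar :=
  match z with inl p => inl (F p) | inr a => inr (f a) end.

Definition bijective {A B : Type} (f : A -> B) : Prop :=
  (forall x y, f x = f y -> x = y) /\ (forall y, exists x, f x = y).

(* ---------- the isometry group I ----------
   An element of I is represented by the pair (F, f) of the isometry F of
   H^3 and its (unique) continuous extension f to S. *)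
Definition Iso : Type := ((H3 -> H3) * (S -> S))%type.

Definition isIsom (g : Iso) : Prop :=
  bijective (fst g) /\
  (forall p q, dH (fst g p) (fst g q) = dH p q) /\
  continuous_bar (union_map (fst g) (snd g)).

Definition iso_comp (g1 g2 : Iso) : Iso :=
  (fun p => fst g1 (fst g2 p), fun a => snd g1 (snd g2 a)).

Definition iso_id : Iso := (fun p => p, fun a => a).

Definition compact_H (K : H3 -> Prop) : Prop :=
  forall u : nat -> H3, (forall n, K (u n)) ->
    exists (phi : nat -> nat) (p : H3),
      (forall n, (phi n < phi (Datatypes.S n))%nat) /\ K p /\
      (forall eps, 0 < eps -> exists N, forall n, (N <= n)%nat ->
         dH (u (phi n)) p < eps).

Definition subgroup_I (G : Iso -> Prop) : Prop :=
  (forall g, G g -> isIsom g) /\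
  G iso_id /\
  (forall g1 g2, G g1 -> G g2 -> G (iso_comp g1 g2)) /\
  (forall g, G g -> exists g', G g' /\ iso_comp g g' = iso_id
                                  /\ iso_comp g' g = iso_id).

Definition acts_freely (G : Iso -> Prop) : Prop :=
  forall g, G g -> (exists p, fst g p = p) -> fst g = (fun p => p).

Definition acts_properly_discontinuously (G : Iso -> Prop) : Prop :=
  forall K, compact_H K ->
    exists l : list Iso, forall g, G g ->
      (exists p, K p /\ K (fst g p)) -> In g l.

Definition acts_cocompactly (G : Iso -> Prop) : Prop :=
  exists K, compact_H K /\
    forall p, exists g q, G g /\ K q /\ fst g q = p.

Definition nice_lattice (G : Iso -> Prop) : Prop :=
  subgroup_I G /\ acts_freely G /\ acts_properly_discontinuously G /\
  acts_cocompactly G.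

Definition bi_lipschitz (H : H3 -> H3) : Prop :=
  bijective H /\ exists K, 0 < K /\
    forall p q, dH p q / K <= dH (H p) (H q) /\ dH (H p) (H q) <= K * dH p q.

Definition homeo_S (h : S -> S) : Prop :=
  continuous_S h /\ exists g : S -> S,
    (forall a, g (h a) = a) /\ (forall a, h (g a) = a) /\ continuous_S g.

Definition equivariant_pair (H : H3 -> H3) (h : S -> S) : Prop :=
  bi_lipschitz H /\ homeo_S h /\ continuous_bar (union_map H h) /\
  exists G1 G2 : Iso -> Prop, nice_lattice G1 /\ nice_lattice G2 /\
    (forall g1, G1 g1 -> exists g2, G2 g2 /\
        forall p, H (fst g1 p) = fst g2 (H p)) /\
    (forall g2, G2 g2 -> exists g1, G1 g1 /\
        forall p, H (fst g1 p) = fst g2 (H p)) /\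
    (forall g1, G1 g1 -> exists g2, G2 g2 /\
        forall a, h (snd g1 a) = snd g2 (h a)) /\
    (forall g2, G2 g2 -> exists g1, G1 g1 /\
        forall a, h (snd g1 a) = snd g2 (h a)).

Definition derived_from (Hn : nat -> H3 -> H3) (hn : nat -> S -> S)
    (H : H3 -> H3) (h : S -> S) : Prop :=
  forall n, exists f g : Iso, isIsom f /\ isIsom g /\
    (forall p, Hn n p = fst f (H (fst g p))) /\
    (forall a, hn n a = snd f (h (snd g a))).

Definition tame (Hn : nat -> H3 -> H3) : Prop :=
  forall p, exists q r, forall n, dH q (Hn n p) <= r.

(* Main.v *)
Require Import Defs.
From Stdlib Require Import Reals Lra Psatz ClassicalEpsilon Classical.
Open Scope R_scope.

Definition vx (u : R*R*R) := fst (fst u).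
Definition vy (u : R*R*R) := snd (fst u).
Definition vz (u : R*R*R) := snd u.
Definition n2 (u : R*R*R) := vx u ^ 2 + vy u ^ 2 + vz u ^ 2.
Definition dd (u v : R*R*R) :=
  (vx u - vx v) ^ 2 + (vy u - vy v) ^ 2 + (vz u - vz v) ^ 2.
Definition dot (u v : R*R*R) := vx u * vx v + vy u * vy v + vz u * vz v.

Lemma eucl_eq u v : eucl u v = sqrt (dd u v).
Proof. destruct u as [[a1 a2] a3]; destruct v as [[b1 b2] b3]. reflexivity. Qed.

Lemma dd_ge0 u v : 0 <= dd u v.
Proof. unfold dd. pose proof (pow2_ge_0 (vx u - vx v)). pose proof (pow2_ge_0 (vy u - vy v)). pose proof (pow2_ge_0 (vz u - vz v)). lra. Qed.

Lemma dd_sym u v : dd u v = dd v u.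
Proof. unfold dd. ring. Qed.

Lemma eucl_sym u v : eucl u v = eucl v u.
Proof. rewrite !eucl_eq, dd_sym. reflexivity. Qed.

Lemma eucl_ge0 u v : 0 <= eucl u v.
Proof. rewrite eucl_eq. apply sqrt_pos. Qed.

Lemma eucl_refl u : eucl u u = 0.
Proof. rewrite eucl_eq. unfold dd. replace (_ + _ + _) with 0 by ring. apply sqrt_0. Qed.

Lemma minkowski a1 a2 a3 b1 b2 b3 :
  sqrt ((a1+b1)^2 + (a2+b2)^2 + (a3+b3)^2) <=
  sqrt (a1^2+a2^2+a3^2) + sqrt (b1^2+b2^2+b3^2).
Proof.
  set (A := a1^2+a2^2+a3^2). set (B := b1^2+b2^2+b3^2).
  assert (HA : 0 <= A) by (unfold A; pose proof (pow2_ge_0 a1); pose proof (pow2_ge_0 a2); pose proof (pow2_ge_0 a3); lra).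
  assert (HB : 0 <= B) by (unfold B; pose proof (pow2_ge_0 b1); pose proof (pow2_ge_0 b2); pose proof (pow2_ge_0 b3); lra).
  assert (Hd : a1*b1+a2*b2+a3*b3 <= sqrt A * sqrt B).
  { rewrite <- sqrt_mult by auto.
    set (d := a1*b1+a2*b2+a3*b3).
    destruct (Rle_or_lt d 0) as [Hn|Hp].
    - pose proof (sqrt_pos (A*B)). lra.
    - rewrite <- (sqrt_pow2 d) by lra. apply sqrt_le_1_alt.
      unfold d, A, B.
      pose proof (pow2_ge_0 (a1*b2-a2*b1)). pose proof (pow2_ge_0 (a1*b3-a3*b1)).
      pose proof (pow2_ge_0 (a2*b3-a3*b2)). nra. }
  rewrite <- (sqrt_pow2 (sqrt A + sqrt B)).
  2:{ pose proof (sqrt_pos A). pose proof (sqrt_pos B). lra. }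
  apply sqrt_le_1_alt.
  replace ((sqrt A + sqrt B)^2) with (sqrt A * sqrt A + sqrt B * sqrt B + 2 * (sqrt A * sqrt B)) by ring.
  rewrite !sqrt_sqrt by auto. unfold A, B in *. lra.
Qed.

Lemma eucl_tri u v w : eucl u w <= eucl u v + eucl v w.
Proof.
  rewrite !eucl_eq. unfold dd.
  pose proof (minkowski (vx u - vx v) (vy u - vy v) (vz u - vz v)
                        (vx v - vx w) (vy v - vy w) (vz v - vz w)) as H.
  replace (vx u - vx v + (vx v - vx w)) with (vx u - vx w) in H by ring.
  replace (vy u - vy v + (vy v - vy w)) with (vy u - vy w) in H by ring.
  replace (vz u - vz v + (vz v - vz w)) with (vz u - vz w) in H by ring.
  exact H.
Qed.

Lemma dbar_sym z w : dbar z w = dbar w z.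
Proof. unfold dbar. apply eucl_sym. Qed.
Lemma dbar_tri z y w : dbar z w <= dbar z y + dbar y w.
Proof. unfold dbar. apply eucl_tri. Qed.
Lemma dbar_ge0 z w : 0 <= dbar z w.
Proof. unfold dbar. apply eucl_ge0. Qed.
Lemma dbar_refl z : dbar z z = 0.
Proof. unfold dbar. apply eucl_refl. Qed.
Lemma dS_sym a b : dS a b = dS b a.
Proof. apply dbar_sym. Qed.
Lemma dS_tri a b c : dS a c <= dS a b + dS b c.
Proof. apply dbar_tri. Qed.
Lemma dS_ge0 a b : 0 <= dS a b.
Proof. apply dbar_ge0. Qed.
Lemma dS_refl a : dS a a = 0.
Proof. apply dbar_refl. Qed.

Lemma sq0 x : x^2 = 0 -> x = 0.
Proof. intro H. destruct (Req_dec x 0) as [h|h]; auto. exfalso. exact (pow_nonzero x 2 h H). Qed.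

Lemma eucl_zero u v : eucl u v = 0 -> u = v.
Proof.
  rewrite eucl_eq. intro H. apply sqrt_eq_0 in H; [|apply dd_ge0].
  destruct u as [[a1 a2] a3], v as [[b1 b2] b3]. unfold dd, vx, vy, vz in H; simpl in H.
  pose proof (pow2_ge_0 (a1-b1)). pose proof (pow2_ge_0 (a2-b2)). pose proof (pow2_ge_0 (a3-b3)).
  assert (E1: (a1-b1)^2 = 0) by lra. assert (E2: (a2-b2)^2 = 0) by lra. assert (E3: (a3-b3)^2 = 0) by lra.
  apply sq0 in E1. apply sq0 in E2. apply sq0 in E3.
  assert (a1 = b1) by lra. assert (a2 = b2) by lra. assert (a3 = b3) by lra. subst. reflexivity.
Qed.

Definition EH (p : H3) := emb (inl p).
Definition Dp (p : H3) := hx p ^ 2 + hy p ^ 2 + (ht p + 1) ^ 2.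
Definition Cf (p q : H3) := 1 + ((hx p - hx q)^2 + (hy p - hy q)^2 + (ht p - ht q)^2)
              / (2 * ht p * ht q).
Definition Phi (p : H3) := 1 - n2 (EH p).
Definition Q (W X : R*R*R) := (1 - n2 W) * (1 - n2 X) + dd W X.

Lemma Dp_pos p : 0 < Dp p.
Proof. unfold Dp. pose proof (ht_pos p). pose proof (pow2_ge_0 (hx p)).
  pose proof (pow2_ge_0 (hy p)). nra. Qed.

Lemma Phi_eq p : Phi p = 4 * ht p / Dp p.
Proof.
  pose proof (Dp_pos p) as HD. unfold Phi, n2, EH, emb, ballmap, vx, vy, vz; simpl.
  unfold Dp in *. field. lra.
Qed.

Lemma Phi_pos p : 0 < Phi p.
Proof. rewrite Phi_eq. pose proof (Dp_pos p). pose proof (ht_pos p).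
  apply Rdiv_lt_0_compat; lra. Qed.

Lemma n2_ge0 u : 0 <= n2 u.
Proof. unfold n2. pose proof (pow2_ge_0 (vx u)). pose proof (pow2_ge_0 (vy u)).
  pose proof (pow2_ge_0 (vz u)). lra. Qed.

Lemma Phi_le1 p : Phi p <= 1.
Proof. unfold Phi. pose proof (n2_ge0 (EH p)). lra. Qed.

Lemma n2_S a : n2 (emb (inr a)) = 1.
Proof.
  destruct a as [[x y]|]; unfold n2, emb, ballmap, vx, vy, vz; simpl.
  - assert (0 < x^2 + y^2 + (0+1)^2) by (pose proof (pow2_ge_0 x); pose proof (pow2_ge_0 y); nra).
    field. lra.
  - ring.
Qed.

Lemma chordH p q : dd (EH p) (EH q) =
  4 * ((hx p - hx q)^2 + (hy p - hy q)^2 + (ht p - ht q)^2) / (Dp p * Dp q).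
Proof.
  pose proof (Dp_pos p). pose proof (Dp_pos q).
  unfold dd, EH, emb, ballmap, vx, vy, vz; simpl. unfold Dp in *. field. lra.
Qed.

Lemma Cf_id p q : Cf p q = 1 + 2 * dd (EH p) (EH q) / (Phi p * Phi q).
Proof.
  rewrite chordH, !Phi_eq. unfold Cf.
  pose proof (Dp_pos p). pose proof (Dp_pos q). pose proof (ht_pos p). pose proof (ht_pos q).
  field. repeat split; lra.
Qed.

Lemma Cf_sym p q : Cf p q = Cf q p.
Proof. rewrite !Cf_id, dd_sym. f_equal. f_equal. ring. Qed.

Lemma Cf_ge1 p q : 1 <= Cf p q.
Proof. rewrite Cf_id. pose proof (dd_ge0 (EH p) (EH q)). pose proof (Phi_pos p). pose proof (Phi_pos q).
  assert (0 <= 2 * dd (EH p) (EH q) / (Phi p * Phi q)).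
  { unfold Rdiv; apply Rmult_le_pos; [lra|]; apply Rlt_le, Rinv_0_lt_compat; nra. } lra. Qed.

Lemma Cf_Q w x : Cf w x + 1 = 2 * Q (EH w) (EH x) / (Phi w * Phi x).
Proof. rewrite Cf_id. unfold Q. fold (Phi w) (Phi x).
  pose proof (Phi_pos w). pose proof (Phi_pos x). field. lra. Qed.

Definition o : H3 := mkH3 0 0 1 Rlt_0_1.

Lemma EH_o : EH o = (0, 0, 0).
Proof. unfold EH, emb, ballmap, o; simpl. f_equal; [f_equal|]; field. Qed.

Lemma Phi_o : Phi o = 1.
Proof. unfold Phi. rewrite EH_o. unfold n2, vx, vy, vz; simpl. ring. Qed.

Lemma Q_o X : Q (EH o) X = 1.
Proof. rewrite EH_o. unfold Q, n2, dd, vx, vy, vz; simpl. ring. Qed.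

Lemma Cf_o x : Cf o x + 1 = 2 / Phi x.
Proof. rewrite Cf_Q, Phi_o, Q_o. pose proof (Phi_pos x). field. lra. Qed.

Lemma Qbounds_aux (a b d : R) : 0 <= a <= 1 -> 0 <= b <= 1 -> d * d <= a * b ->
  -2 * d <= a + b -> 1 - 2*d + a*b <= 4 /\ (1-a)^2/4 <= 1 - 2*d + a*b.
Proof.
  intros Ha Hb Hd Hd2. split.
  - nra.
  - assert (H1 : 1 - 2*d + a*b >= (1-d)^2) by nra.
    assert (H2 : (1-a)/2 <= 1 - d).
    { destruct (Rle_or_lt d ((1+a)/2)) as [h|h]; [lra|].
      exfalso. assert (0 <= (1+a)/2) by lra.
      assert ((1+a)/2 * ((1+a)/2) < d * d) by nra.
      pose proof (pow2_ge_0 (1-a)). nra. }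
    assert (0 <= (1-a)/2) by lra.
    assert (((1-a)/2)^2 <= (1-d)^2) by nra. nra.
Qed.

Lemma Q_alt W X : Q W X = 1 - 2 * dot W X + n2 W * n2 X.
Proof. unfold Q, dot, n2, dd. ring. Qed.

Lemma Qbounds W X : n2 W <= 1 -> n2 X <= 1 ->
  Q W X <= 4 /\ (1 - n2 W)^2/4 <= Q W X.
Proof.
  intros HW HX. rewrite Q_alt. apply Qbounds_aux.
  - pose proof (n2_ge0 W). lra.
  - pose proof (n2_ge0 X). lra.
  - unfold dot, n2.
    pose proof (pow2_ge_0 (vx W*vy X-vy W*vx X)). pose proof (pow2_ge_0 (vx W*vz X-vz W*vx X)).
    pose proof (pow2_ge_0 (vy W*vz X-vz W*vy X)). nra.
  - unfold dot, n2.
    pose proof (pow2_ge_0 (vx W+vx X)). pose proof (pow2_ge_0 (vy W+vy X)).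
    pose proof (pow2_ge_0 (vz W+vz X)). nra.
Qed.

Lemma Q_ge_dd W X : n2 W <= 1 -> n2 X <= 1 -> dd W X <= Q W X.
Proof. intros. unfold Q. nra. Qed.

Lemma n2_EH_le1 p : n2 (EH p) <= 1.
Proof. pose proof (Phi_pos p). unfold Phi in *. lra. Qed.

Lemma T1 x y : Cf x y + 1 <= 2 * (Cf o x + 1) * (Cf o y + 1).
Proof.
  rewrite Cf_Q, !Cf_o. pose proof (Phi_pos x). pose proof (Phi_pos y).
  destruct (Qbounds (EH x) (EH y) (n2_EH_le1 x) (n2_EH_le1 y)) as [H1 _].
  unfold Rdiv. rewrite Rinv_mult.
  assert (0 < / Phi x) by (apply Rinv_0_lt_compat; lra).
  assert (0 < / Phi y) by (apply Rinv_0_lt_compat; lra).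
  replace (2 * (2 * / Phi x) * (2 * / Phi y)) with (2 * 4 * (/ Phi x * / Phi y)) by ring.
  apply Rmult_le_compat_r; [|lra]. apply Rlt_le, Rmult_lt_0_compat; lra.
Qed.

Lemma T2 x y : Cf o y + 1 <= 2 * (Cf o x + 1) * (Cf x y + 1).
Proof.
  rewrite (Cf_Q x y), !Cf_o. pose proof (Phi_pos x). pose proof (Phi_pos y).
  destruct (Qbounds (EH x) (EH y) (n2_EH_le1 x) (n2_EH_le1 y)) as [_ H1].
  fold (Phi x) in H1.
  apply (Rmult_le_reg_r (Phi x * Phi x * Phi y)). { repeat apply Rmult_lt_0_compat; lra. }
  replace (2 / Phi y * (Phi x * Phi x * Phi y)) with (2 * (Phi x * Phi x)) by (field; lra).
  replace (2 * (2 / Phi x) * (2 * Q (EH x) (EH y) / (Phi x * Phi y)) * (Phi x * Phi x * Phi y))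
    with (8 * Q (EH x) (EH y)) by (field; lra).
  unfold Phi in *. replace ((1 - n2 (EH x))^2) with ((1 - n2 (EH x)) * (1 - n2 (EH x))) in H1 by ring.
  lra.
Qed.

Lemma ln_le' x y : 0 < x -> x <= y -> ln x <= ln y.
Proof. intros. destruct (Req_dec x y). subst; lra. apply Rlt_le, ln_increasing; lra. Qed.

Lemma exp_le' x y : x <= y -> exp x <= exp y.
Proof. intros. destruct (Req_dec x y). subst; lra. apply Rlt_le, exp_increasing; lra. Qed.

Lemma arcosh_arg u v : 1 <= u <= v -> 1 <= u + sqrt (u*u-1) /\ u + sqrt (u*u-1) <= v + sqrt (v*v-1).
Proof.
  intros [H1 H2]. pose proof (sqrt_pos (u*u-1)).
  assert (sqrt (u*u-1) <= sqrt (v*v-1)) by (apply sqrt_le_1_alt; nra). lra.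
Qed.

Lemma arcosh_le u v : 1 <= u <= v -> arcosh u <= arcosh v.
Proof. intros H. destruct (arcosh_arg u v H). unfold arcosh. apply ln_le'; lra. Qed.

Lemma arcosh_lt u v : 1 <= u -> u < v -> arcosh u < arcosh v.
Proof. intros H1 H2. destruct (arcosh_arg u v) as [A B]; [lra|].
  assert (sqrt (u*u-1) <= sqrt (v*v-1)) by (apply sqrt_le_1_alt; nra).
  unfold arcosh. apply ln_increasing; lra. Qed.

Lemma arcosh_inj u v : 1 <= u -> 1 <= v -> arcosh u = arcosh v -> u = v.
Proof. intros Hu Hv He. destruct (Rtotal_order u v) as [h|[h|h]]; auto.
  - pose proof (arcosh_lt u v Hu h). lra.
  - pose proof (arcosh_lt v u Hv h). lra. Qed.

Lemma arcosh_bound u r : 1 <= u -> arcosh u <= r -> u <= exp r.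
Proof. intros Hu Hr. destruct (arcosh_arg u u) as [A _]; [lra|].
  pose proof (sqrt_pos (u*u-1)).
  apply exp_le' in Hr. unfold arcosh in Hr. rewrite exp_ln in Hr by lra. lra. Qed.

Lemma dH_Cf p q : dH p q = arcosh (Cf p q).
Proof. reflexivity. Qed.

Lemma Cf_le_of_dH p q r : dH p q <= r -> Cf p q <= exp r.
Proof. rewrite dH_Cf. apply arcosh_bound, Cf_ge1. Qed.

Lemma dH_le_of_Cf p q M : Cf p q <= M -> dH p q <= arcosh M.
Proof. intro. rewrite dH_Cf. apply arcosh_le. pose proof (Cf_ge1 p q). lra. Qed.

Lemma iso_Cf g p q : isIsom g -> Cf (fst g p) (fst g q) = Cf p q.
Proof. intros [_ [Hd _]]. specialize (Hd p q). rewrite !dH_Cf in Hd.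
  apply arcosh_inj; auto using Cf_ge1. Qed.

Lemma Q_pos w x : 0 < Q (EH w) (EH x).
Proof.
  destruct (Qbounds (EH w) (EH x) (n2_EH_le1 w) (n2_EH_le1 x)) as [_ H].
  fold (Phi w) in H. pose proof (Phi_pos w). nra.
Qed.

Lemma Phi_img g w x : isIsom g -> fst g w = o ->
  Phi (fst g x) = Phi w * Phi x / Q (EH w) (EH x).
Proof.
  intros Hg Hw. pose proof (Cf_o (fst g x)) as K1. rewrite <- Hw, iso_Cf in K1 by auto.
  rewrite Cf_Q in K1. pose proof (Phi_pos (fst g x)). pose proof (Phi_pos w).
  pose proof (Phi_pos x). pose proof (Q_pos w x).
  assert (K2 : Phi (fst g x) = 2 / (2 * Q (EH w) (EH x) / (Phi w * Phi x))).
  { rewrite K1. field. lra. }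
  rewrite K2. field. repeat split; lra.
Qed.

Lemma distort g w x y : isIsom g -> fst g w = o ->
  dd (EH (fst g x)) (EH (fst g y)) =
  dd (EH x) (EH y) * (Phi w * Phi w) / (Q (EH w) (EH x) * Q (EH w) (EH y)).
Proof.
  intros Hg Hw.
  pose proof (Cf_id (fst g x) (fst g y)) as K1. rewrite iso_Cf, Cf_id in K1 by auto.
  rewrite (Phi_img g w x), (Phi_img g w y) in K1 by auto.
  pose proof (Phi_pos w). pose proof (Phi_pos x). pose proof (Phi_pos y).
  pose proof (Q_pos w x). pose proof (Q_pos w y).
  set (A := dd (EH x) (EH y)) in *. set (B := dd (EH (fst g x)) (EH (fst g y))) in *.
  set (Qx := Q (EH w) (EH x)) in *. set (Qy := Q (EH w) (EH y)) in *.
  assert (K2 : A / (Phi x * Phi y) = B / (Phi w * Phi x / Qx * (Phi w * Phi y / Qy))) by lra.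
  assert (K3 : B = A / (Phi x * Phi y) * (Phi w * Phi x / Qx * (Phi w * Phi y / Qy))).
  { rewrite K2. field. repeat split; lra. }
  rewrite K3. field. repeat split; lra.
Qed.

Lemma dbar_H x y : dbar (inl x) (inl y) = sqrt (dd (EH x) (EH y)).
Proof. unfold dbar. apply eucl_eq. Qed.

Lemma dd_le4 u v : n2 u <= 1 -> n2 v <= 1 -> dd u v <= 4.
Proof. intros. unfold dd, n2 in *.
  pose proof (pow2_ge_0 (vx u + vx v)). pose proof (pow2_ge_0 (vy u + vy v)).
  pose proof (pow2_ge_0 (vz u + vz v)). nra. Qed.

Lemma LB_int g w x y k : isIsom g -> fst g w = o -> 0 < k -> k <= Phi w ->
  k / 4 * dbar (inl x) (inl y) <= dbar (inl (fst g x)) (inl (fst g y)).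
Proof.
  intros Hg Hw Hk Hkw. rewrite !dbar_H, (distort g w x y) by auto.
  pose proof (Q_pos w x). pose proof (Q_pos w y).
  destruct (Qbounds (EH w) (EH x) (n2_EH_le1 w) (n2_EH_le1 x)) as [Qx _].
  destruct (Qbounds (EH w) (EH y) (n2_EH_le1 w) (n2_EH_le1 y)) as [Qy _].
  pose proof (dd_ge0 (EH x) (EH y)).
  rewrite <- (sqrt_pow2 (k/4)) at 1 by lra. rewrite <- sqrt_mult by (try apply pow2_ge_0; lra).
  apply sqrt_le_1_alt.
  set (A := dd (EH x) (EH y)) in *.
  unfold Rdiv. rewrite Rinv_mult.
  assert (/ Q (EH w) (EH x) >= / 4). { apply Rle_ge, Rinv_le_contravar; lra. }
  assert (/ Q (EH w) (EH y) >= / 4). { apply Rle_ge, Rinv_le_contravar; lra. }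
  assert (Phi w * Phi w >= k * k) by nra.
  assert (0 < / Q (EH w) (EH x)) by (apply Rinv_0_lt_compat; lra).
  assert (0 < / Q (EH w) (EH y)) by (apply Rinv_0_lt_compat; lra).
  assert (/ Q (EH w) (EH x) * / Q (EH w) (EH y) >= /4 * /4) by nra.
  replace ((k * / 4) ^ 2 * A) with (A * (k*k) * (/4 * /4)) by ring.
  apply Rmult_le_compat; try nra.
Qed.

Lemma UB_int g w x y e : isIsom g -> fst g w = o -> 0 < e ->
  e * e <= dd (EH w) (EH x) -> e * e <= dd (EH w) (EH y) ->
  dbar (inl (fst g x)) (inl (fst g y)) <= 2 * Phi w / (e * e).
Proof.
  intros Hg Hw He Hx Hy. rewrite !dbar_H, (distort g w x y) by auto.
  pose proof (Q_pos w x). pose proof (Q_pos w y). pose proof (Phi_pos w).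
  pose proof (Q_ge_dd (EH w) (EH x) (n2_EH_le1 w) (n2_EH_le1 x)).
  pose proof (Q_ge_dd (EH w) (EH y) (n2_EH_le1 w) (n2_EH_le1 y)).
  pose proof (dd_le4 (EH x) (EH y) (n2_EH_le1 x) (n2_EH_le1 y)).
  pose proof (dd_ge0 (EH x) (EH y)).
  assert (0 < e * e) by nra.
  rewrite <- (sqrt_pow2 (2 * Phi w / (e * e))).
  2:{ apply Rlt_le. unfold Rdiv. apply Rmult_lt_0_compat; [lra|]. apply Rinv_0_lt_compat; lra. }
  apply sqrt_le_1_alt.
  set (A := dd (EH x) (EH y)) in *. set (Qx := Q (EH w) (EH x)) in *. set (Qy := Q (EH w) (EH y)) in *.
  set (P := Phi w) in *. set (E := e * e) in *.
  replace ((2 * P / E) ^ 2) with (4 * (P * P) / (E * E)) by (field; lra).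
  apply (Rmult_le_reg_r (Qx * Qy * (E * E))). { repeat apply Rmult_lt_0_compat; lra. }
  replace (A * (P * P) / (Qx * Qy) * (Qx * Qy * (E * E))) with (A * (P * P) * (E * E)) by (field; lra).
  replace (4 * (P * P) / (E * E) * (Qx * Qy * (E * E))) with (4 * (P * P) * (Qx * Qy)) by (field; lra).
  assert (E * E <= Qx * Qy) by nra.
  assert (0 <= P * P) by nra.
  apply Rmult_le_compat; nra.
Qed.

Lemma inv_ok (u1 u2 u3 : R) :
  let N := u1^2+u2^2+(1-u3)^2 in N <> 0 ->
  ballmap (2*u1/N) (2*u2/N) ((1-(u1^2+u2^2+u3^2))/N) = (u1, u2, u3).
Proof. intros N HN.
  set (x := 2*u1/N). set (y := 2*u2/N). set (t := (1-(u1^2+u2^2+u3^2))/N).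
  assert (HD: x^2+y^2+(t+1)^2 = 4/N). { unfold x,y,t,N in *. field. auto. }
  unfold ballmap. rewrite HD. unfold x,y,t,N in *. f_equal; [f_equal|]; field; auto.
Qed.

Lemma approx a eps : 0 < eps -> exists x : H3, dbar (inr a) (inl x) < eps.
Proof.
  intros He. pose proof (n2_S a) as HA.
  destruct (emb (inr a)) as [[A1 A2] A3] eqn:EA.
  unfold n2, vx, vy, vz in HA; cbn [fst snd] in HA.
  set (l := Rmin (eps/2) (1/2)).
  assert (Hl : 0 < l <= 1/2 /\ l < eps) by (unfold l; unfold Rmin; destruct Rle_dec; lra).
  set (u1 := (1-l)*A1). set (u2 := (1-l)*A2). set (u3 := (1-l)*A3).
  assert (Hn : u1^2+u2^2+u3^2 = (1-l)^2) by (transitivity ((1-l)^2 * (A1^2+A2^2+A3^2)); [unfold u1,u2,u3; ring | rewrite HA; ring]).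
  assert (Hn1 : u1^2+u2^2+u3^2 < 1) by (rewrite Hn; nra).
  assert (Hu3 : u3 < 1).
  { pose proof (pow2_ge_0 u1). pose proof (pow2_ge_0 u2). destruct (Rlt_le_dec u3 1); auto. nra. }
  set (N := u1^2+u2^2+(1-u3)^2).
  assert (HN : 0 < N) by (unfold N; pose proof (pow2_ge_0 u1); pose proof (pow2_ge_0 u2); nra).
  assert (Ht : 0 < (1-(u1^2+u2^2+u3^2))/N) by (apply Rdiv_lt_0_compat; lra).
  exists (mkH3 (2*u1/N) (2*u2/N) _ Ht).
  unfold dbar. rewrite EA. cbn [emb hx hy ht]. unfold N. rewrite inv_ok by (fold N; lra).
  rewrite eucl_eq. unfold dd, vx, vy, vz; cbn [fst snd].
  replace ((A1 - u1) ^ 2 + (A2 - u2) ^ 2 + (A3 - u3) ^ 2) with (l^2) .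
  2:{ transitivity (l^2 * (A1^2+A2^2+A3^2)); [rewrite HA; ring | unfold u1,u2,u3; ring]. }
  rewrite sqrt_pow2; lra.
Qed.

Lemma D0_pos x y : 0 < x^2+y^2+(0+1)^2.
Proof. pose proof (pow2_ge_0 x). pose proof (pow2_ge_0 y). nra. Qed.

Definition binv (U : R*R*R) : R*R :=
  let N := vx U ^ 2 + vy U ^ 2 + (1 - vz U) ^ 2 in (2 * vx U / N, 2 * vy U / N).

Lemma binv_back x y : binv (emb (inr (Some (x, y)))) = (x, y).
Proof.
  pose proof (D0_pos x y). unfold binv, emb, ballmap, vx, vy, vz. cbn [fst snd].
  set (D := x^2+y^2+(0+1)^2) in *.
  assert (HN : (2 * x / D) ^ 2 + (2 * y / D) ^ 2 + (1 - (x ^ 2 + y ^ 2 + 0 ^ 2 - 1) / D) ^ 2 = 4/D)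
    by (unfold D in *; field; lra).
  rewrite HN. f_equal; field; lra.
Qed.

Lemma emb_S_inj a b : emb (inr a) = emb (inr b) -> a = b.
Proof.
  intro E.
  destruct a as [[x y]|], b as [[x' y']|]; auto.
  - pose proof (f_equal binv E) as E'. rewrite !binv_back in E'. rewrite E'. reflexivity.
  - exfalso. cbn [emb] in E. unfold ballmap in E. injection E as E1 E2 E3. pose proof (D0_pos x y).
    unfold Rdiv in E3. match type of E3 with _ * / ?D = _ =>
      apply (Rmult_eq_compat_r D) in E3; rewrite Rmult_assoc, Rinv_l in E3 by lra end.
    nra.
  - exfalso. cbn [emb] in E. unfold ballmap in E. injection E as E1 E2 E3. symmetry in E3. pose proof (D0_pos x' y').
    unfold Rdiv in E3. match type of E3 with _ * / ?D = _ =>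
      apply (Rmult_eq_compat_r D) in E3; rewrite Rmult_assoc, Rinv_l in E3 by lra end.
    nra.
Qed.

Lemma dS_zero a b : dS a b = 0 -> a = b.
Proof. intro H. apply emb_S_inj. apply eucl_zero. exact H. Qed.

Lemma dS_pos a b : a <> b -> 0 < dS a b.
Proof. intro H. pose proof (dS_ge0 a b). destruct (Req_dec (dS a b) 0) as [h|h].
  - exfalso. apply H, dS_zero, h.
  - lra. Qed.

Lemma sphere_surj L : n2 L = 1 -> exists a, emb (inr a) = L.
Proof.
  destruct L as [[l1 l2] l3]. unfold n2, vx, vy, vz; cbn [fst snd]. intro HL.
  destruct (Req_dec l3 1) as [E|E].
  - subst. exists None. simpl.
    pose proof (pow2_ge_0 l1). pose proof (pow2_ge_0 l2).
    assert (l1^2 = 0) by nra. assert (l2^2 = 0) by nra.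
    apply sq0 in H1. apply sq0 in H2. subst. reflexivity.
  - set (N := l1^2+l2^2+(1-l3)^2).
    assert (HN : 0 < N).
    { unfold N. pose proof (pow2_ge_0 l1). pose proof (pow2_ge_0 l2).
      assert (l3 < 1). { destruct (Rlt_le_dec l3 1); auto. nra. }
      assert (0 < (1-l3)^2). { apply pow_lt. lra. } lra. }
    exists (Some (2*l1/N, 2*l2/N)). simpl.
    rewrite <- (inv_ok l1 l2 l3) by (fold N; lra). fold N.
    replace ((1 - (l1 ^ 2 + l2 ^ 2 + l3 ^ 2)) / N) with 0 by (rewrite HL; field; lra).
    reflexivity.
Qed.

Lemma le_eps A B : (forall e, 0 < e -> A <= B + e) -> A <= B.
Proof. intro H. destruct (Rle_or_lt A B); auto. specialize (H ((A-B)/2)). lra. Qed.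

Lemma cont_at F f z eps : continuous_bar (union_map F f) -> 0 < eps ->
  exists delta, 0 < delta /\ forall w, dbar z w < delta ->
    dbar (union_map F f z) (union_map F f w) < eps.
Proof. intros Hc He. apply Hc, He. Qed.

Lemma near_bd (F : H3 -> H3) f a eps : continuous_bar (union_map F f) -> 0 < eps ->
  exists x, dbar (inr a) (inl x) < eps /\ dbar (inr (f a)) (inl (F x)) < eps.
Proof.
  intros Hc He. destruct (Hc (inr a) eps He) as [d [Hd Hw]].
  destruct (approx a (Rmin d eps)) as [x Hx]. { apply Rmin_pos; lra. }
  exists x. split.
  - pose proof (Rmin_r d eps). lra.
  - apply (Hw (inl x)). pose proof (Rmin_l d eps). lra.
Qed.

Lemma LB_bd g w k a b : isIsom g -> fst g w = o -> 0 < k -> k <= Phi w ->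
  k / 4 * dS a b <= dS (snd g a) (snd g b).
Proof.
  intros Hg Hw Hk Hkw. pose proof Hg as [_ [_ Hc]].
  pose proof (Phi_le1 w).
  apply le_eps. intros e He.
  destruct (near_bd (fst g) (snd g) a (e/4) Hc) as [x [Hx1 Hx2]]; [lra|].
  destruct (near_bd (fst g) (snd g) b (e/4) Hc) as [y [Hy1 Hy2]]; [lra|].
  pose proof (LB_int g w x y k Hg Hw Hk Hkw) as HL.
  assert (T1 : dS a b <= dbar (inr a) (inl x) + dbar (inl x) (inl y) + dbar (inl y) (inr b)).
  { unfold dS. pose proof (dbar_tri (inr a) (inl x) (inr b)). pose proof (dbar_tri (inl x) (inl y) (inr b)). lra. }
  assert (T2 : dbar (inl (fst g x)) (inl (fst g y)) <=
     dbar (inl (fst g x)) (inr (snd g a)) + dS (snd g a) (snd g b) + dbar (inr (snd g b)) (inl (fst g y))).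
  { unfold dS. pose proof (dbar_tri (inl (fst g x)) (inr (snd g a)) (inl (fst g y))).
    pose proof (dbar_tri (inr (snd g a)) (inr (snd g b)) (inl (fst g y))). lra. }
  rewrite (dbar_sym (inl (fst g x)) (inr (snd g a))) in T2. rewrite (dbar_sym (inl y)) in T1.
  assert (T3 : k/4 * dS a b <= k/4 * (dbar (inl x) (inl y) + e/2)).
  { apply Rmult_le_compat_l; lra. }
  assert (k/4 * (e/2) <= e/2) by nra.
  rewrite Rmult_plus_distr_l in T3.
  lra.
Qed.

Lemma sq_le_of_le a b : 0 <= a -> a <= b -> a * a <= b * b.
Proof. intros. nra. Qed.

Lemma UB_bd g w eta a b : isIsom g -> fst g w = o -> 0 < eta ->
  eta <= eucl (EH w) (emb (inr a)) -> eta <= eucl (EH w) (emb (inr b)) ->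
  dS (snd g a) (snd g b) <= 8 * Phi w / (eta * eta).
Proof.
  intros Hg Hw He Ha Hb. pose proof Hg as [_ [_ Hc]].
  apply le_eps. intros e He'.
  set (eps := Rmin (e/2) (eta/2)).
  assert (Heps : 0 < eps /\ eps <= e/2 /\ eps <= eta/2).
  { unfold eps. split; [apply Rmin_pos; lra|]. split; [apply Rmin_l|apply Rmin_r]. }
  destruct (near_bd (fst g) (snd g) a (eps/2) Hc) as [x [Hx1 Hx2]]; [lra|].
  destruct (near_bd (fst g) (snd g) b (eps/2) Hc) as [y [Hy1 Hy2]]; [lra|].
  assert (Ex : eta/2 <= eucl (EH w) (EH x)).
  { pose proof (eucl_tri (EH w) (EH x) (emb (inr a))).
    unfold dbar in Hx1. rewrite eucl_sym in Hx1. unfold EH in *. lra. }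
  assert (Ey : eta/2 <= eucl (EH w) (EH y)).
  { pose proof (eucl_tri (EH w) (EH y) (emb (inr b))).
    unfold dbar in Hy1. rewrite eucl_sym in Hy1. unfold EH in *. lra. }
  rewrite eucl_eq in Ex, Ey.
  assert (Dx : eta/2 * (eta/2) <= dd (EH w) (EH x)).
  { rewrite <- (sqrt_sqrt (dd (EH w) (EH x))) by apply dd_ge0. apply sq_le_of_le; lra. }
  assert (Dy : eta/2 * (eta/2) <= dd (EH w) (EH y)).
  { rewrite <- (sqrt_sqrt (dd (EH w) (EH y))) by apply dd_ge0. apply sq_le_of_le; lra. }
  pose proof (UB_int g w x y (eta/2) Hg Hw ltac:(lra) Dx Dy) as HU.
  replace (2 * Phi w / (eta / 2 * (eta / 2))) with (8 * Phi w / (eta * eta)) in HU by (field; lra).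
  assert (T : dS (snd g a) (snd g b) <= dbar (inr (snd g a)) (inl (fst g x))
     + dbar (inl (fst g x)) (inl (fst g y)) + dbar (inl (fst g y)) (inr (snd g b))).
  { unfold dS. pose proof (dbar_tri (inr (snd g a)) (inl (fst g x)) (inr (snd g b))).
    pose proof (dbar_tri (inl (fst g x)) (inl (fst g y)) (inr (snd g b))). lra. }
  rewrite (dbar_sym (inl (fst g y))) in T. lra.
Qed.

Lemma conj_bd (H : H3 -> H3) h g g' : isIsom g -> isIsom g' ->
  continuous_bar (union_map H h) -> (forall p, H (fst g p) = fst g' (H p)) ->
  forall a, h (snd g a) = snd g' (h a).
Proof.
  intros Hg Hg' Hc Hconj a. pose proof Hg as [_ [_ Cg]]. pose proof Hg' as [_ [_ Cg']].
  apply dS_zero. apply Rle_antisym; [|apply dS_ge0].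
  apply le_eps. intros e He. rewrite Rplus_0_l.
  destruct (Hc (inr (snd g a)) (e/2)) as [d1 [Hd1 P1]]; [lra|].
  destruct (Cg (inr a) d1 Hd1) as [d2 [Hd2 P2]].
  destruct (Cg' (inr (h a)) (e/2)) as [d4 [Hd4 P4]]; [lra|].
  destruct (Hc (inr a) d4 Hd4) as [d3 [Hd3 P3]].
  destruct (approx a (Rmin d2 d3)) as [x Hx]; [apply Rmin_pos; lra|].
  pose proof (Rmin_l d2 d3). pose proof (Rmin_r d2 d3).
  specialize (P2 (inl x) ltac:(lra)). cbn [union_map] in P2.
  specialize (P1 _ P2). cbn [union_map] in P1.
  specialize (P3 (inl x) ltac:(lra)). cbn [union_map] in P3.
  specialize (P4 _ P3). cbn [union_map] in P4.
  rewrite Hconj in P1.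
  unfold dS. pose proof (dbar_tri (inr (h (snd g a))) (inl (fst g' (H x))) (inr (snd g' (h a)))) as TT.
  rewrite (dbar_sym (inl _)) in TT. lra.
Qed.

Definition sincr (phi : nat -> nat) := forall n, (phi n < phi (Datatypes.S n))%nat.

Lemma sincr_mono phi : sincr phi -> forall m n, (m < n)%nat -> (phi m < phi n)%nat.
Proof. intros H m n Hmn. induction Hmn.
  - apply H.
  - specialize (H m0). lia. Qed.

Lemma sincr_ge phi : sincr phi -> forall n, (n <= phi n)%nat.
Proof. intros H n. induction n; [lia|]. specialize (H n). lia. Qed.

Lemma sincr_comp phi psi : sincr phi -> sincr psi -> sincr (fun n => phi (psi n)).
Proof. intros H1 H2 n. apply sincr_mono; auto. Qed.

Lemma Un_cv_sub u l phi : Un_cv u l -> sincr phi -> Un_cv (fun n => u (phi n)) l.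
Proof. intros H Hp eps He. destruct (H eps He) as [N HN]. exists N. intros n Hn.
  apply HN. pose proof (sincr_ge phi Hp n). lia. Qed.

Lemma inv_S_le N n : (0 < N)%nat -> (N <= n)%nat -> / INR (Datatypes.S n) <= / INR N.
Proof. intros. apply Rinv_le_contravar. apply lt_0_INR; lia. apply le_INR; lia. Qed.

Lemma BW1 (u : nat -> R) : (forall n, -1 <= u n <= 1) ->
  exists phi l, sincr phi /\ Un_cv (fun n => u (phi n)) l.
Proof.
  intro Hu. destruct (Bolzano_Weierstrass u (fun c => -1 <= c <= 1) (compact_P3 (-1) 1) Hu) as [l Hl].
  assert (Hp : forall N k, { p | (N <= p)%nat /\ Rabs (u p - l) < / INR (Datatypes.S k) }).
  { intros N k. apply constructive_indefinite_description.
    assert (Hk : 0 < / INR (Datatypes.S k)) by (apply Rinv_0_lt_compat, lt_0_INR; lia).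
    destruct (Hl (fun y => Rabs (y - l) < / INR (Datatypes.S k)) N) as [p [Hp1 Hp2]].
    - exists (mkposreal _ Hk). intros y Hy. exact Hy.
    - exists p. auto. }
  set (phi := fix f (n : nat) : nat := match n with
        | O => proj1_sig (Hp O O)
        | Datatypes.S m => proj1_sig (Hp (Datatypes.S (f m)) (Datatypes.S m)) end).
  assert (P1 : sincr phi).
  { intro n. simpl. destruct (Hp (Datatypes.S (phi n)) (Datatypes.S n)) as [p [h1 h2]]. simpl. lia. }
  assert (P2 : forall n, Rabs (u (phi n) - l) < / INR (Datatypes.S n)).
  { intro n. destruct n; simpl.
    - destruct (Hp O O) as [p [h1 h2]]. simpl. exact h2.
    - destruct (Hp (Datatypes.S (phi n)) (Datatypes.S n)) as [p [h1 h2]]. simpl. exact h2. }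
  exists phi, l. split; auto.
  intros eps He. destruct (archimed_cor1 eps He) as [N [HN1 HN2]]. exists N. intros n Hn.
  unfold Rdist. pose proof (P2 n). pose proof (inv_S_le N n HN2 Hn). lra.
Qed.

Lemma coord_bound a : -1 <= vx (emb (inr a)) <= 1 /\ -1 <= vy (emb (inr a)) <= 1 /\
                      -1 <= vz (emb (inr a)) <= 1.
Proof.
  pose proof (n2_S a) as H. unfold n2 in H.
  pose proof (pow2_ge_0 (vx (emb (inr a)))). pose proof (pow2_ge_0 (vy (emb (inr a)))).
  pose proof (pow2_ge_0 (vz (emb (inr a)))).
  repeat split; nra.
Qed.

Lemma compact_S (s : nat -> S) : exists psi a, sincr psi /\
  forall eps, 0 < eps -> exists N, forall n, (N <= n)%nat -> dS (s (psi n)) a < eps.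
Proof.
  destruct (BW1 (fun n => vx (emb (inr (s n))))) as [p1 [l1 [I1 C1]]].
  { intro n. apply coord_bound. }
  destruct (BW1 (fun n => vy (emb (inr (s (p1 n)))))) as [p2 [l2 [I2 C2]]].
  { intro n. apply coord_bound. }
  destruct (BW1 (fun n => vz (emb (inr (s (p1 (p2 n))))))) as [p3 [l3 [I3 C3]]].
  { intro n. apply coord_bound. }
  set (psi := fun n => p1 (p2 (p3 n))).
  assert (Ipsi : sincr psi) by (unfold psi; apply (sincr_comp p1 (fun n => p2 (p3 n))); [auto | apply sincr_comp; auto]).
  assert (D1 : Un_cv (fun n => vx (emb (inr (s (psi n))))) l1).
  { apply (Un_cv_sub (fun n => vx (emb (inr (s (p1 n))))) l1 (fun n => p2 (p3 n))); auto.
    apply sincr_comp; auto. }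
  assert (D2 : Un_cv (fun n => vy (emb (inr (s (psi n))))) l2).
  { apply (Un_cv_sub (fun n => vy (emb (inr (s (p1 (p2 n)))))) l2 p3); auto. }
  assert (D3 : Un_cv (fun n => vz (emb (inr (s (psi n))))) l3) by exact C3.
  assert (HL : l1^2 + l2^2 + l3^2 = 1).
  { assert (Hc : Un_cv (fun n => vx (emb (inr (s (psi n)))) * vx (emb (inr (s (psi n))))
                  + vy (emb (inr (s (psi n)))) * vy (emb (inr (s (psi n))))
                  + vz (emb (inr (s (psi n)))) * vz (emb (inr (s (psi n))))) (l1*l1+l2*l2+l3*l3)).
    { apply CV_plus; [apply CV_plus|]; apply CV_mult; auto. }
    assert (Hc1 : Un_cv (fun n => vx (emb (inr (s (psi n)))) * vx (emb (inr (s (psi n))))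
                  + vy (emb (inr (s (psi n)))) * vy (emb (inr (s (psi n))))
                  + vz (emb (inr (s (psi n)))) * vz (emb (inr (s (psi n))))) 1).
    { intros eps He. exists O. intros n _. pose proof (n2_S (s (psi n))) as E. unfold n2 in E.
      unfold Rdist. replace (vx (emb (inr (s (psi n)))) * vx (emb (inr (s (psi n)))) +
         vy (emb (inr (s (psi n)))) * vy (emb (inr (s (psi n)))) +
         vz (emb (inr (s (psi n)))) * vz (emb (inr (s (psi n)))) - 1) with 0 by (rewrite <- E; ring).
      rewrite Rabs_R0. lra. }
    pose proof (UL_sequence _ _ _ Hc Hc1). rewrite <- H. ring. }
  destruct (sphere_surj (l1, l2, l3)) as [a Ha].
  { unfold n2, vx, vy, vz. cbn [fst snd]. exact HL. }
  exists psi, a. split; auto.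
  intros eps He.
  destruct (D1 (eps/2)) as [N1 HN1]; [lra|].
  destruct (D2 (eps/2)) as [N2 HN2]; [lra|].
  destruct (D3 (eps/2)) as [N3 HN3]; [lra|].
  exists (N1 + N2 + N3)%nat. intros n Hn.
  specialize (HN1 n ltac:(lia)). specialize (HN2 n ltac:(lia)). specialize (HN3 n ltac:(lia)).
  unfold Rdist in *.
  unfold dS, dbar. rewrite Ha, eucl_eq. unfold dd. cbn [vx vy vz fst snd].
  set (x := vx (emb (inr (s (psi n))))) in *. set (y := vy (emb (inr (s (psi n))))) in *.
  set (z := vz (emb (inr (s (psi n))))) in *.
  rewrite <- (sqrt_pow2 eps) by lra. apply sqrt_lt_1_alt.
  split. { pose proof (pow2_ge_0 (x-l1)). pose proof (pow2_ge_0 (y-l2)). pose proof (pow2_ge_0 (z-l3)). lra. }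
  assert ((x-l1)^2 < (eps/2)^2). { rewrite <- !Rsqr_pow2. apply Rsqr_lt_abs_1. rewrite (Rabs_right (eps/2)) by lra. exact HN1. }
  assert ((y-l2)^2 < (eps/2)^2). { rewrite <- !Rsqr_pow2. apply Rsqr_lt_abs_1. rewrite (Rabs_right (eps/2)) by lra. exact HN2. }
  assert ((z-l3)^2 < (eps/2)^2). { rewrite <- !Rsqr_pow2. apply Rsqr_lt_abs_1. rewrite (Rabs_right (eps/2)) by lra. exact HN3. }
  nra.
Qed.

Lemma unif_sep (h : S -> S) : continuous_S h -> (forall x y, h x = h y -> x = y) ->
  forall d, 0 < d -> exists d', 0 < d' /\ forall x y, d <= dS x y -> d' <= dS (h x) (h y).
Proof.
  intros Hc Hi d Hd. apply NNPP. intro Hn.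
  assert (Hseq : forall n : nat, exists xy : S * S,
            d <= dS (fst xy) (snd xy) /\ dS (h (fst xy)) (h (snd xy)) < / INR (Datatypes.S n)).
  { intro n. apply NNPP. intro Hn2. apply Hn. exists (/ INR (Datatypes.S n)). split.
    - apply Rinv_0_lt_compat, lt_0_INR; lia.
    - intros x y Hxy. apply Rnot_lt_le. intro Hlt. apply Hn2. exists (x, y). auto. }
  assert (Hc' : forall n : nat, { xy : S * S | d <= dS (fst xy) (snd xy) /\
            dS (h (fst xy)) (h (snd xy)) < / INR (Datatypes.S n) }).
  { intro n. apply constructive_indefinite_description. apply Hseq. }
  set (c := fun n => proj1_sig (Hc' n)).
  assert (Pc : forall n, d <= dS (fst (c n)) (snd (c n)) /\
            dS (h (fst (c n))) (h (snd (c n))) < / INR (Datatypes.S n)).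
  { intro n. unfold c. destruct (Hc' n) as [xy P]. simpl. exact P. }
  destruct (compact_S (fun n => fst (c n))) as [p1 [xs [I1 C1]]].
  destruct (compact_S (fun n => snd (c (p1 n)))) as [p2 [ys [I2 C2]]].
  set (m := fun n => p1 (p2 n)).
  assert (Im : sincr m) by (unfold m; apply (sincr_comp p1 p2); auto).
  assert (Cx : forall eps, 0 < eps -> exists N, forall n, (N <= n)%nat -> dS (fst (c (m n))) xs < eps).
  { intros eps He. destruct (C1 eps He) as [N HN]. exists N. intros n Hnn. apply HN.
    pose proof (sincr_ge p2 I2 n). lia. }
  assert (Hsep : d <= dS xs ys).
  { apply le_eps. intros e He.
    destruct (Cx (e/2)) as [N1 HN1]; [lra|]. destruct (C2 (e/2)) as [N2 HN2]; [lra|].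
    specialize (HN1 (N1+N2)%nat ltac:(lia)). specialize (HN2 (N1+N2)%nat ltac:(lia)).
    destruct (Pc (m (N1+N2)%nat)) as [P1 _].
    pose proof (dS_tri (fst (c (m (N1 + N2)%nat))) xs (snd (c (m (N1 + N2)%nat)))).
    pose proof (dS_tri xs ys (snd (c (m (N1 + N2)%nat)))).
    rewrite (dS_sym ys) in H0. unfold m in *. lra. }
  assert (Hne : h xs <> h ys).
  { intro E. apply Hi in E. subst. rewrite dS_refl in Hsep. lra. }
  pose proof (dS_pos _ _ Hne) as Heta. set (eta := dS (h xs) (h ys)) in *.
  destruct (Hc xs (eta/4)) as [dx [Hdx Px]]; [lra|].
  destruct (Hc ys (eta/4)) as [dy [Hdy Py]]; [lra|].
  destruct (Cx dx Hdx) as [N1 HN1]. destruct (C2 dy Hdy) as [N2 HN2].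
  destruct (archimed_cor1 (eta/4)) as [N3 [HN3 HN3']]; [lra|].
  set (n := (N1 + N2 + N3)%nat).
  specialize (HN1 n ltac:(unfold n; lia)). specialize (HN2 n ltac:(unfold n; lia)).
  rewrite dS_sym in HN1, HN2.
  specialize (Px _ HN1). specialize (Py _ HN2).
  destruct (Pc (m n)) as [_ P2].
  assert (/ INR (Datatypes.S (m n)) <= / INR N3).
  { apply inv_S_le; auto. pose proof (sincr_ge m Im n). unfold n in *. lia. }
  pose proof (dS_tri (h xs) (h (fst (c (m n)))) (h ys)).
  pose proof (dS_tri (h (fst (c (m n)))) (h (snd (c (m n)))) (h ys)).
  rewrite (dS_sym (h (snd (c (m n))))) in H1.
  unfold m in *. fold eta in H0. lra.
Qed.

Lemma K_bdd K : compact_H K -> exists M, forall q, K q -> Cf o q <= M.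
Proof.
  intros HK. apply NNPP. intro Hn.
  assert (Hs : forall n : nat, exists q, K q /\ INR n < Cf o q).
  { intro n. apply NNPP. intro Hn2. apply Hn. exists (INR n). intros q Kq.
    apply Rnot_lt_le. intro Hlt. apply Hn2. exists q. auto. }
  assert (Hs' : forall n : nat, { q | K q /\ INR n < Cf o q }).
  { intro n. apply constructive_indefinite_description. apply Hs. }
  set (u := fun n => proj1_sig (Hs' n)).
  assert (Pu : forall n, K (u n) /\ INR n < Cf o (u n)).
  { intro n. unfold u. destruct (Hs' n) as [q P]. exact P. }
  destruct (HK u (fun n => proj1 (Pu n))) as [phi [p [Iphi [Kp Cv]]]].
  destruct (Cv 1 Rlt_0_1) as [N HN].
  set (B := 2 * (Cf o p + 1) * (exp 1 + 1)).
  destruct (INR_unbounded B) as [n0 Hn0].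
  set (n := (N + n0)%nat).
  specialize (HN n ltac:(unfold n; lia)).
  apply Rlt_le, Cf_le_of_dH in HN. rewrite Cf_sym in HN.
  pose proof (T2 p (u (phi n))) as HT.
  assert (Cf p (u (phi n)) + 1 <= exp 1 + 1) by lra.
  assert (0 <= Cf o p + 1) by (pose proof (Cf_ge1 o p); lra).
  assert (2 * (Cf o p + 1) * (Cf p (u (phi n)) + 1) <= B).
  { unfold B. apply Rmult_le_compat_l; [lra|]. lra. }
  destruct (Pu (phi n)) as [_ Hb].
  assert (INR n0 <= INR (phi n)). { apply le_INR. pose proof (sincr_ge phi Iphi n). unfold n in *. lia. }
  lra.
Qed.

Lemma comp_isIsom g1 g2 : isIsom g1 -> isIsom g2 -> isIsom (iso_comp g1 g2).
Proof.
  intros [[I1 S1] [D1 C1]] [[I2 S2] [D2 C2]]. unfold iso_comp, isIsom; cbn [fst snd].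
  split; [split|split].
  - intros x y E. apply I2, I1, E.
  - intro y. destruct (S1 y) as [x1 E1]. destruct (S2 x1) as [x2 E2]. exists x2. subst. reflexivity.
  - intros p q. rewrite D1, D2. reflexivity.
  - intros z eps He.
    destruct (C1 (union_map (fst g2) (snd g2) z) eps He) as [d1 [Hd1 P1]].
    destruct (C2 z d1 Hd1) as [d2 [Hd2 P2]].
    exists d2. split; auto. intros w Hw. specialize (P1 _ (P2 w Hw)).
    destruct z, w; exact P1.
Qed.

Lemma finite_max (f : nat -> R) N : exists r, forall n, (n < N)%nat -> f n <= r.
Proof.
  induction N.
  - exists 0. intros n Hn. lia.
  - destruct IHN as [r Hr]. exists (Rmax r (f N)). intros n Hn.
    destruct (Nat.eq_dec n N).
    + subst. apply Rmax_r.
    + eapply Rle_trans; [apply Hr; lia | apply Rmax_l].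
Qed.

Lemma pig W Za Zb Zc d : d <= eucl Za Zb -> d <= eucl Za Zc -> d <= eucl Zb Zc ->
  (d/2 <= eucl W Za /\ d/2 <= eucl W Zb) \/ (d/2 <= eucl W Za /\ d/2 <= eucl W Zc) \/
  (d/2 <= eucl W Zb /\ d/2 <= eucl W Zc).
Proof.
  intros Hab Hac Hbc.
  pose proof (eucl_tri Za W Zb). pose proof (eucl_tri Za W Zc). pose proof (eucl_tri Zb W Zc).
  rewrite (eucl_sym Za W) in *. rewrite (eucl_sym Zb W) in *.
  destruct (Rle_or_lt (d/2) (eucl W Za)); destruct (Rle_or_lt (d/2) (eucl W Zb));
  destruct (Rle_or_lt (d/2) (eucl W Zc)); try tauto; lra.
Qed.

Lemma phi_lower F w eta sig x y : isIsom F -> fst F w = o -> 0 < eta ->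
  eta <= eucl (EH w) (emb (inr x)) -> eta <= eucl (EH w) (emb (inr y)) ->
  sig <= dS (snd F x) (snd F y) -> sig * (eta * eta) / 8 <= Phi w.
Proof.
  intros HF Hw He Hx Hy Hs. pose proof (UB_bd F w eta x y HF Hw He Hx Hy) as U.
  assert (0 < eta * eta) by nra.
  assert (sig <= 8 * Phi w / (eta * eta)) by lra.
  apply (Rmult_le_reg_r (8 / (eta * eta))). { apply Rdiv_lt_0_compat; lra. }
  replace (sig * (eta * eta) / 8 * (8 / (eta * eta))) with sig by (field; lra).
  replace (Phi w * (8 / (eta * eta))) with (8 * Phi w / (eta * eta)) by (field; lra). lra.
Qed.

Theorem lemma1p3 (H : H3 -> H3) (h : S -> S)
    (Hn : nat -> H3 -> H3) (hn : nat -> S -> S)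
    (a b c alpha beta gamma : S) :
  equivariant_pair H h ->
  derived_from Hn hn H h ->
  a <> b -> a <> c -> b <> c ->
  converges_S (fun n => hn n a) alpha ->
  converges_S (fun n => hn n b) beta ->
  converges_S (fun n => hn n c) gamma ->
  alpha <> beta -> alpha <> gamma -> beta <> gamma ->
  tame Hn.
Proof.
  intros HE HD Hab Hac Hbc Ca Cb Cc Hal Hag Hbg.
  destruct HE as [[HBij [L [HL HLip]]] [[Hhc [hinv [Hh1 [Hh2 Hhic]]]] [HcH [G1 [G2 [NG1 [NG2 [Conj1 _]]]]]]]].
  destruct NG1 as [[SG1iso [_ [_ SG1inv]]] [_ [_ [K [HK Kcov]]]]].
  destruct NG2 as [[SG2iso _] _].
  assert (hinj : forall x y, h x = h y -> x = y).
  { intros x y E. rewrite <- (Hh1 x), <- (Hh1 y), E. reflexivity. }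
  destruct (K_bdd K HK) as [MK0 HMK0].
  set (MK := Rmax MK0 1).
  assert (HMK : forall q, K q -> Cf o q <= MK).
  { intros q Kq. eapply Rle_trans; [apply HMK0, Kq| apply Rmax_l]. }
  assert (MK1 : 1 <= MK) by apply Rmax_r.
  set (d0 := Rmin (dS a b) (Rmin (dS a c) (dS b c))).
  pose proof (dS_pos _ _ Hab). pose proof (dS_pos _ _ Hac). pose proof (dS_pos _ _ Hbc).
  assert (Hd0 : 0 < d0) by (unfold d0; repeat apply Rmin_pos; auto).
  assert (Hd0ab : d0 <= dS a b) by (unfold d0; apply Rmin_l).
  assert (Hd0ac : d0 <= dS a c) by (unfold d0; eapply Rle_trans; [apply Rmin_r | apply Rmin_l]).
  assert (Hd0bc : d0 <= dS b c) by (unfold d0; eapply Rle_trans; [apply Rmin_r | apply Rmin_r]).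
  set (s0 := Rmin (dS alpha beta) (Rmin (dS alpha gamma) (dS beta gamma))).
  pose proof (dS_pos _ _ Hal). pose proof (dS_pos _ _ Hag). pose proof (dS_pos _ _ Hbg).
  assert (Hs0 : 0 < s0) by (unfold s0; repeat apply Rmin_pos; auto).
  assert (Hs0ab : s0 <= dS alpha beta) by (unfold s0; apply Rmin_l).
  assert (Hs0ac : s0 <= dS alpha gamma) by (unfold s0; eapply Rle_trans; [apply Rmin_r | apply Rmin_l]).
  assert (Hs0bc : s0 <= dS beta gamma) by (unfold s0; eapply Rle_trans; [apply Rmin_r | apply Rmin_r]).
  destruct (Ca (s0/3)) as [Na HNa]; [lra|].
  destruct (Cb (s0/3)) as [Nb HNb]; [lra|].
  destruct (Cc (s0/3)) as [Nc HNc]; [lra|].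
  set (N := (Na + Nb + Nc)%nat).
  intro p. exists o.
  set (B1 := 2 * (Cf o p + 1) * (MK + 1)).
  assert (HB1 : 0 < B1) by (unfold B1; pose proof (Cf_ge1 o p); repeat apply Rmult_lt_0_compat; lra).
  set (k1 := 2 / B1).
  assert (Hk1 : 0 < k1) by (unfold k1; apply Rdiv_lt_0_compat; lra).
  set (d1 := k1 / 4 * d0).
  assert (Hd1 : 0 < d1) by (unfold d1; apply Rmult_lt_0_compat; lra).
  destruct (unif_sep h Hhc hinj d1 Hd1) as [d2 [Hd2 Hsep]].
  set (eta := d2 / 2).
  set (k2 := s0 / 3 * (eta * eta) / 8).
  assert (Hk2 : 0 < k2) by (unfold k2, eta; apply Rdiv_lt_0_compat; [|lra]; apply Rmult_lt_0_compat; nra).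
  set (B3 := 2 * (Cf o (H o) + 1) * (exp (L * arcosh MK) + 1)).
  set (R1 := arcosh (2 * (2 / k2) * B3)).
  destruct (finite_max (fun n => dH o (Hn n p)) N) as [R0 HR0].
  exists (Rmax R0 R1). intro n.
  destruct (Nat.lt_ge_cases n N) as [Hlt|Hge].
  { eapply Rle_trans; [apply (HR0 n Hlt) | apply Rmax_l]. }
  eapply Rle_trans; [|apply Rmax_r].
  destruct (HD n) as [f [g [Hf [Hg [HHn Hhn]]]]].
  destruct (Kcov (fst g p)) as [ga [q [Gga [Kq Eq]]]].
  destruct (SG1inv ga Gga) as [gi [Ggi [E1 E2]]].
  destruct (Conj1 ga Gga) as [ga' [Gga' HHga]].
  pose proof (SG1iso ga Gga) as Iga. pose proof (SG1iso gi Ggi) as Igi.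
  pose proof (SG2iso ga' Gga') as Iga'.
  set (k := iso_comp gi g).
  assert (Ik : isIsom k) by (apply comp_isIsom; auto).
  assert (kp : fst k p = q).
  { unfold k, iso_comp; cbn [fst]. rewrite <- Eq.
    pose proof (f_equal (fun z => fst z q) E2) as E. cbn in E. exact E. }
  assert (gk : forall z, snd g z = snd ga (snd k z)).
  { intro z. unfold k, iso_comp; cbn [snd].
    pose proof (f_equal (fun w => snd w (snd g z)) E1) as E. cbn in E. symmetry. exact E. }
  pose proof (conj_bd H h ga ga' Iga Iga' HcH HHga) as bconj.
  set (F := iso_comp f ga').
  assert (IF : isIsom F) by (apply comp_isIsom; auto).
  assert (Hhn' : forall z, hn n z = snd F (h (snd k z))).
  { intro z. rewrite Hhn, gk, bconj. reflexivity. }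
  assert (HHn' : Hn n p = fst F (H q)).
  { rewrite HHn, <- Eq, HHga. reflexivity. }
  pose proof Ik as [[_ Sk] _].
  destruct (Sk o) as [w Hw].
  assert (Phiw : k1 <= Phi w).
  { pose proof (iso_Cf k w p Ik) as E. rewrite Hw, kp in E.
    pose proof (HMK q Kq) as Mq. rewrite E, Cf_sym in Mq.
    pose proof (T2 p w) as T. pose proof (Cf_o w) as Co.
    pose proof (Cf_ge1 o p). pose proof (Phi_pos w).
    assert (2 / Phi w <= B1).
    { rewrite <- Co. eapply Rle_trans; [exact T|]. unfold B1. apply Rmult_le_compat_l; lra. }
    unfold k1. apply (Rmult_le_reg_r (B1 / Phi w)). { apply Rdiv_lt_0_compat; lra. }
    replace (2 / B1 * (B1 / Phi w)) with (2 / Phi w) by (field; lra).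
    replace (Phi w * (B1 / Phi w)) with B1 by (field; lra). lra. }
  assert (LBk : forall x y, d0 <= dS x y -> d2 <= dS (h (snd k x)) (h (snd k y))).
  { intros x y Hxy. apply Hsep. pose proof (LB_bd k w k1 x y Ik Hw Hk1 Phiw).
    unfold d1. assert (k1/4 * d0 <= k1/4 * dS x y) by (apply Rmult_le_compat_l; lra). lra. }
  pose proof (LBk a b Hd0ab) as Sab. pose proof (LBk a c Hd0ac) as Sac. pose proof (LBk b c Hd0bc) as Sbc.
  pose proof IF as [[_ SF] _].
  destruct (SF o) as [w' Hw'].
  assert (Hsab : s0/3 <= dS (hn n a) (hn n b)).
  { specialize (HNa n ltac:(unfold N in *; lia)). specialize (HNb n ltac:(unfold N in *; lia)).
    pose proof (dS_tri alpha (hn n a) beta). pose proof (dS_tri (hn n a) (hn n b) beta).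
    rewrite dS_sym in HNa. lra. }
  assert (Hsac : s0/3 <= dS (hn n a) (hn n c)).
  { specialize (HNa n ltac:(unfold N in *; lia)). specialize (HNc n ltac:(unfold N in *; lia)).
    pose proof (dS_tri alpha (hn n a) gamma). pose proof (dS_tri (hn n a) (hn n c) gamma).
    rewrite dS_sym in HNa. lra. }
  assert (Hsbc : s0/3 <= dS (hn n b) (hn n c)).
  { specialize (HNb n ltac:(unfold N in *; lia)). specialize (HNc n ltac:(unfold N in *; lia)).
    pose proof (dS_tri beta (hn n b) gamma). pose proof (dS_tri (hn n b) (hn n c) gamma).
    rewrite dS_sym in HNb. lra. }
  rewrite !Hhn' in Hsab, Hsac, Hsbc.
  assert (Phiw' : k2 <= Phi w').
  { unfold dS, dbar in Sab, Sac, Sbc.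
    assert (He : 0 < eta) by (unfold eta; lra).
    destruct (pig (EH w') _ _ _ d2 Sab Sac Sbc) as [[P1 P2]|[[P1 P2]|[P1 P2]]]; unfold k2.
    - exact (phi_lower F w' eta (s0/3) (h (snd k a)) (h (snd k b)) IF Hw' He P1 P2 Hsab).
    - exact (phi_lower F w' eta (s0/3) (h (snd k a)) (h (snd k c)) IF Hw' He P1 P2 Hsac).
    - exact (phi_lower F w' eta (s0/3) (h (snd k b)) (h (snd k c)) IF Hw' He P1 P2 Hsbc). }
  assert (HqB : Cf o (H q) + 1 <= B3).
  { pose proof (T2 (H o) (H q)) as T.
    destruct (HLip q o) as [_ Lq].
    assert (dH q o <= arcosh MK).
    { apply dH_le_of_Cf. rewrite Cf_sym. apply HMK, Kq. }
    assert (HH4 : dH (H q) (H o) <= L * arcosh MK).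
    { eapply Rle_trans; [exact Lq|]. apply Rmult_le_compat_l; lra. }
    apply Cf_le_of_dH in HH4. rewrite Cf_sym in HH4.
    pose proof (Cf_ge1 o (H o)).
    eapply Rle_trans; [exact T|]. unfold B3. apply Rmult_le_compat_l; lra. }
  rewrite HHn'. apply dH_le_of_Cf.
  rewrite <- Hw'. rewrite iso_Cf by exact IF.
  pose proof (T1 w' (H q)) as T. pose proof (Cf_o w') as Co. pose proof (Phi_pos w').
  assert (2 / Phi w' <= 2 / k2).
  { unfold Rdiv. apply Rmult_le_compat_l; [lra|]. apply Rinv_le_contravar; lra. }
  assert (0 <= Cf o (H q) + 1) by (pose proof (Cf_ge1 o (H q)); lra).
  assert (2 * (Cf o w' + 1) * (Cf o (H q) + 1) <= 2 * (2 / k2) * B3).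
  { rewrite Co. apply Rmult_le_compat; try lra.
    - apply Rmult_le_pos; [lra|]. apply Rlt_le, Rdiv_lt_0_compat; lra. }
  lra.
Qed.
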